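(* Let $G$ be a group with neutral element $e$, $R$ a unital ring, and $\alpha=(\{D_g\}_{g\in G},\{\alpha_g\}_{g\in G})$ a unital partial action of $G$ on $R$, with $1_g$ the multiplicative identity of $D_g$. Assume (a) $D_gD_h=(0)$ for all $g,h\in G$ with $g\ne h$ and $g,h\ne e$, and (b) the set $\{1_g\mid g\in G\}$ is finite. Then for every normal subgroup $N$ of $G$, the induced $G/N$-grading of the partial skew group ring $R\star_\alpha G=\bigoplus_{g\in G}D_g\delta_g$ makes it an epsilon-crossed product.
   Context: A unital partial action of $G$ on $R$ consists of unital ideals $D_g$ of $R$ and ring isomorphisms $\alpha_g\colon D_{g^{-1}}\to D_g$ such that $D_e=R$, $\alpha_e=\mathrm{id}_R$, $\alpha_g(D_{g^{-1}}D_h)=D_gD_{gh}$ for all $g,h$, and $\alpha_g(\alpha_h(x))=\alpha_{gh}(x)$ for all $x\in D_{h^{-1}}D_{(gh)^{-1}}$. The partial skew group ring $R\star_\alpha G=\bigoplus_gD_g\delta_g$ ($\delta_g$ formal symbols) has multiplication $(a_g\delta_g)(b_h\delta_h)=a_g\alpha_g(b_h1_{g^{-1}})\delta_{gh}$, and is $G$-graded by $\{D_g\delta_g\}$. The induced $G/N$-grading is $S_C=\bigoplus_{g\in C}D_g\delta_g$. A grading $\{T_h\}_{h\in H}$ is epsilon-strong if $T_hT_{h^{-1}}T_h=T_h$ for all $h$ ($AB$ = finite sums of products) and each $T_hT_{h^{-1}}$ has a multiplicative identity $\epsilon_h$. An element $s\in T_h$ is epsilon-invertible if there is $t\in T_{h^{-1}}$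 with $st=\epsilon_h$ and $ts=\epsilon_{h^{-1}}$. An epsilon-crossed product is an epsilon-strongly graded ring in which every $T_h$ contains an epsilon-invertible element. *)

(* Defs.v *)
From HB Require Import structures.
From mathcomp Require Import all_boot all_algebra.
From mathcomp Require Import monoid.
From mathcomp Require Import boolp classical_sets cardinality fsbigop.

Set Implicit Arguments.
Unset Strict Implicit.
Unset Printing Implicit Defensive.

Import GRing.Theory.
Local Open Scope ring_scope.
Local Open Scope classical_set_scope.

Notation gmul := (@monoid.mul _).
Notation ginv := (@monoid.inv _).
Notation gone := (@monoid.one _).

Section RingIdeals.
Variable R : pzRingType.

Definition is_ideal (I : set R) : Prop :=
  [/\ I 0, (forall x y, I x -> I y -> I (x - y)),
      (forall r x, I x -> I (r * x)) & (forall r x, I x -> I (x * r))].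

Definition is_identity_of (I : set R) (u : R) : Prop :=
  I u /\ (forall x, I x -> u * x = x /\ x * u = x).

Definition unital_ideal (I : set R) : Prop :=
  is_ideal I /\ exists u, is_identity_of I u.

Definition setprod (A B : set R) : set R :=
  fun z => exists s : seq (R * R),
    (forall p, p \in s -> A p.1 /\ B p.2) /\ z = \sum_(p <- s) p.1 * p.2.

End RingIdeals.

Section PartialAction.
Variables (G : groupType) (R : pzRingType).

(* alpha_g : D_{g^-1} -> D_g is a ring isomorphism (alpha is given as a
   total function R -> R; only its values on D_{g^-1} matter). *)
Definition ring_iso_on (A B : set R) (f : R -> R) : Prop :=
  [/\ (forall x, A x -> B (f x)),
      (forall x y, A x -> A y -> f (x + y) = f x + f y),
      (forall x y, A x -> A y -> f (x * y) = f x * f y),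
      (forall x y, A x -> A y -> f x = f y -> x = y)
    & (forall y, B y -> exists2 x, A x & f x = y)].

Definition unital_partial_action (D : G -> set R) (alpha : G -> R -> R) : Prop :=
  [/\ (forall g, unital_ideal (D g)),
      (forall g, ring_iso_on (D (ginv g)) (D g) (alpha g)),
      D gone = setT /\ (forall x, alpha gone x = x),
      (forall g h, (alpha g @` setprod (D (ginv g)) (D h))
                   = setprod (D g) (D (gmul g h)))
    & (forall g h x, setprod (D (ginv h)) (D (ginv (gmul g h))) x ->
         alpha g (alpha h x) = alpha (gmul g h) x)].

(* The partial skew group ring R *_alpha G = (+)_g D_g delta_g, realised as
   the finitely supported functions a : G -> R with a g \in D_g
   (a = \sum_g (a g) delta_g). *)
Definition skew_elem (D : G -> set R) (a : G -> R) : Prop :=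
  finite_set [set g | a g != 0] /\ (forall g, D g (a g)).

(* Multiplication: (a_g delta_g)(b_h delta_h) = a_g alpha_g(b_h 1_{g^-1}) delta_{gh},
   extended bilinearly; coefficient at k collects the pairs (g, g^-1 k). *)
Definition skew_mul (alpha : G -> R -> R) (one1 : G -> R) (a b : G -> R) : G -> R :=
  fun k => \sum_(g \in [set: G]) a g * alpha g (b (gmul (ginv g) k) * one1 (ginv g)).

Definition skew_setprod (alpha : G -> R -> R) (one1 : G -> R)
    (A B : set (G -> R)) : set (G -> R) :=
  fun z => exists s : seq ((G -> R) * (G -> R)),
    (forall p, p \in s -> A p.1 /\ B p.2) /\
    z = (fun k => \sum_(p <- s) skew_mul alpha one1 p.1 p.2 k).

Definition normal_subgroup (N : set G) : Prop :=
  [/\ N gone, (forall x y, N x -> N y -> N (gmul x y)),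
      (forall x, N x -> N (ginv x))
    & (forall x y, N y -> N (gmul (ginv x) (gmul y x)))].

(* homogeneous component of the induced G/N-grading for the coset xN:
   S_{xN} = (+)_{g in xN} D_g delta_g *)
Definition coset_component (D : G -> set R) (N : set G) (x : G) : set (G -> R) :=
  fun a => skew_elem D a /\ (forall g, a g != 0 -> N (gmul (ginv x) g)).

End PartialAction.

Section EpsilonStrong.
(* A grading {T_i} of a ring with multiplication [mul] and subset product
   [sprod], indexed by a group with inversion [invI]. *)
Variables (S I : Type) (mul : S -> S -> S) (sprod : set S -> set S -> set S)
          (invI : I -> I) (T : I -> set S).

Definition eps_unit (i : I) (e : S) : Prop :=
  sprod (T i) (T (invI i)) e /\
  (forall z, sprod (T i) (T (invI i)) z -> mul e z = z /\ mul z e = z).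

Definition epsilon_strong : Prop :=
  forall i, sprod (sprod (T i) (T (invI i))) (T i) = T i /\
            exists e, eps_unit i e.

Definition epsilon_crossed_product : Prop :=
  epsilon_strong /\
  forall i, exists s, T i s /\ exists t, T (invI i) t /\
     exists ei eiv, eps_unit i ei /\ eps_unit (invI i) eiv /\
                    mul s t = ei /\ mul t s = eiv.

End EpsilonStrong.

(* Main.v *)
Require Import Defs.
From HB Require Import structures.
From mathcomp Require Import all_boot all_algebra.
From mathcomp Require Import monoid.
From mathcomp Require Import boolp classical_sets cardinality fsbigop.

Set Implicit Arguments.
Unset Strict Implicit.
Unset Printing Implicit Defensive.
Import GRing.Theory.
Local Open Scope ring_scope.
Local Open Scope classical_set_scope.

Section Main.
Variables (G : groupType) (R : pzRingType)
    (D : G -> set R) (alpha : G -> R -> R) (u : G -> R).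
Hypothesis HPA : unital_partial_action D alpha.
Hypothesis Hone : forall g, is_identity_of (D g) (u g).
Hypothesis Hort : forall g h, g != h -> g != gone -> h != gone -> setprod (D g) (D h) = [set 0].
Hypothesis Hfin : finite_set (range u).

Lemma D0 g : D g 0.
Proof. by case: HPA => /(_ g) [[]]. Qed.

Lemma DN g x : D g x -> D g (- x).
Proof. by case: HPA => /(_ g) [[_ HB _ _] _] _ _ _ _ Hx; rewrite -sub0r; apply: HB => //; apply: D0. Qed.

Lemma DD g x y : D g x -> D g y -> D g (x + y).
Proof. by case: HPA => /(_ g) [[_ HB _ _] _] _ _ _ _ Hx Hy; rewrite -[y]opprK; apply: HB => //; apply: DN. Qed.

Lemma DMl g r x : D g x -> D g (r * x).
Proof. by case: HPA => /(_ g) [[_ _ HB _] _] _ _ _ _; apply: HB. Qed.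

Lemma DMr g r x : D g x -> D g (x * r).
Proof. by case: HPA => /(_ g) [[_ _ _ HB] _] _ _ _ _; apply: HB. Qed.

Lemma Dsum g (I : eqType) (s : seq I) (F : I -> R) : (forall i, i \in s -> D g (F i)) -> D g (\sum_(i <- s) F i).
Proof.
move=> H; rewrite big_seq; apply: big_ind => //; [exact: D0 | exact: DD].
Qed.

Lemma Du g : D g (u g). Proof. by case: (Hone g). Qed.
Lemma uL g x : D g x -> u g * x = x. Proof. by case: (Hone g) => _ /(_ x) H /H []. Qed.
Lemma uR g x : D g x -> x * u g = x. Proof. by case: (Hone g) => _ /(_ x) H /H []. Qed.
Lemma uu g : u g * u g = u g. Proof. exact/uL/Du. Qed.

Lemma uC g r : u g * r = r * u g.
Proof.
have h1 : (u g * r) * u g = u g * r by apply/uR/DMr/Du.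
have h2 : u g * (r * u g) = r * u g by apply/uL/DMl/Du.
by rewrite -h1 -mulrA h2.
Qed.

Lemma De x : D gone x.
Proof. by case: HPA => _ _ [-> _]. Qed.

Lemma ue : u gone = 1.
Proof. by rewrite -[u gone]mulr1 uL //; apply: De. Qed.

Lemma alphae x : alpha gone x = x.
Proof. by case: HPA => _ _ [_ ->]. Qed.

Lemma alpha_in g x : D (ginv g) x -> D g (alpha g x).
Proof. by case: HPA => _ /(_ g) [H _ _ _ _] _ _ _; apply: H. Qed.

Lemma alpha0 g : alpha g 0 = 0.
Proof.
case: HPA => _ /(_ g) [_ H _ _ _] _ _ _.
have := H 0 0 (D0 _) (D0 _); rewrite addr0 => h.
by apply: (addrI (alpha g 0)); rewrite addr0 -h.
Qed.

Lemma alpha_u g : alpha g (u (ginv g)) = u g.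
Proof.
case: HPA => _ /(_ g) [Hin _ HM _ Hsur] _ _ _.
rewrite -[LHS](uR (alpha_in (Du _))).
have [y Hy Hyu] := Hsur _ (Du g).
rewrite -Hyu -HM ?Du //.
  by rewrite (uL Hy).
exact: Du.
Qed.

Lemma setprod_single g h x y : D g x -> D h y -> setprod (D g) (D h) (x * y).
Proof.
move=> Hx Hy; exists [:: (x, y)]; split; last by rewrite big_seq1.
by move=> p; rewrite inE => /eqP ->.
Qed.

Lemma setprod_sub g h z : setprod (D g) (D h) z -> D h z.
Proof.
move=> [s [Hs ->]]; apply: Dsum => p /Hs [_]; exact: DMl.
Qed.

Lemma zero_prod g h x y : g != h -> g != gone -> h != gone -> D g x -> D h y -> x * y = 0.
Proof. by move=> gh g1 h1 Hx Hy; have := setprod_single Hx Hy; rewrite Hort. Qed.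

Lemma alpha_img g k b : D (gmul (ginv g) k) b ->
  setprod (D g) (D k) (alpha g (b * u (ginv g))).
Proof.
move=> Hb; case: HPA => _ _ _ Himg _.
have := Himg g (gmul (ginv g) k); rewrite mulVKg => <-.
exists (u (ginv g) * b); first exact/setprod_single/Hb/Du.
by rewrite uC.
Qed.


Lemma fsumE (F : G -> R) (r : seq G) : uniq r -> (forall i, i \notin r -> F i = 0) ->
  \sum_(i \in [set: G]) F i = \sum_(i <- r) F i.
Proof.
move=> ur Hr; rewrite (fsbigE r) //; first by apply: eq_bigl => i; rewrite in_setT.
by move=> i _; apply: Hr.
Qed.

Lemma fin_enum (A : set G) : finite_set A -> exists r : seq G, uniq r /\ forall g, A g -> g \in r.
Proof.
move=> /finite_fsetP [X ->]; exists (finmap.enum_fset X); split; first exact: finmap.fset_uniq.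
by move=> g.
Qed.

Definition dl (c : R) : G -> R := fun g => if g == gone then c else 0.

Lemma mul_dlL c b k : skew_mul alpha u (dl c) b k = c * b k.
Proof.
rewrite /skew_mul (fsumE (r := [:: gone])) //; last first.
  by move=> i; rewrite inE /dl => /negbTE ->; rewrite mul0r.
by rewrite big_seq1 /dl eqxx invg1 mul1g ue mulr1 alphae.
Qed.

Lemma mul_dlR b c k : skew_mul alpha u b (dl c) k = b k * alpha k (c * u (ginv k)).
Proof.
rewrite /skew_mul (fsumE (r := [:: k])) //; last first.
  move=> i; rewrite inE /dl => ik.
  case: eqP => [/eqP h|_]; last by rewrite mul0r alpha0 mulr0.
  by move: ik; move: h; rewrite mulg_eq1 eqg_inv => /eqP ->; rewrite eqxx.
by rewrite big_seq1 /dl mulVg eqxx.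
Qed.

Lemma FinU : finite_set [set g | g != gone /\ u g != 0].
Proof.
set S := [set g | _].
have inj : {in S &, injective u}.
  move=> g h /set_mem [g1 ug] /set_mem [h1 uh] E; apply/eqP; apply: contraT => gh.
  suff: u g = 0 by move/eqP; rewrite (negbTE ug).
  rewrite -uu.
  by apply: (zero_prod gh) => //; [exact: Du | rewrite E; exact: Du].
rewrite -(eq_finite_set (inj_card_eq inj)).
by apply: sub_finite_set Hfin => _ [g _ <-]; exists g.
Qed.


Definition comp (S : set G) (a : G -> R) :=
  skew_elem D a /\ (forall g, a g != 0 -> S g).

Lemma NZ a b k : skew_mul alpha u a b k != 0 ->
  exists g, a g != 0 /\ b (gmul (ginv g) k) != 0.
Proof.
move=> H; apply: contrapT => Hn; move/eqP: H; apply.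
apply: fsbig1 => g _.
have [ag|ag] := eqVneq (a g) 0; first by rewrite ag mul0r.
have [bg|bg] := eqVneq (b (gmul (ginv g) k)) 0; first by rewrite bg mul0r alpha0 mulr0.
by exfalso; apply: Hn; exists g.
Qed.

Lemma mul_comp S S' a b : comp S a -> comp S' b ->
  comp [set k | exists g h, S g /\ S' h /\ k = gmul g h] (skew_mul alpha u a b).
Proof.
move=> [[fa Da] Sa] [[fb Db] Sb]; split; first split.
- apply: sub_finite_set (finite_image2 gmul fa fb) => k /= /NZ [g [ag bg]].
  by exists g => //; exists (gmul (ginv g) k) => //; rewrite mulVKg.
- move=> k; apply: Dsum => g _; apply: DMl; apply: (@setprod_sub g).
  exact/alpha_img/Db.
- move=> k /NZ [g [ag bg]]; exists g, (gmul (ginv g) k); split; first exact: Sa.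
  by split; [exact: Sb | rewrite mulVKg].
Qed.

Lemma comp_add S a b : comp S a -> comp S b -> comp S (fun k => a k + b k).
Proof.
move=> [[fa Da] Sa] [[fb Db] Sb]; split; first split.
- apply: (@sub_finite_set _ _ ([set g | a g != 0] `|` [set g | b g != 0])); last first.
    by rewrite finite_setU; split.
  move=> k /=.
  have [->|] := eqVneq (a k) 0; last by left.
  by rewrite add0r; right.
- by move=> k; apply: DD.
- move=> k; have [ak|] := eqVneq (a k) 0; last by move=> /Sa.
  by rewrite ak add0r => /Sb.
Qed.

Lemma comp0 S : comp S (fun _ => 0).
Proof.
split; first split; last by move=> g; rewrite eqxx.
- by apply: sub_finite_set (finite_set0 G) => g /=; rewrite eqxx.
- by move=> g; apply: D0.
Qed.

Lemma sum_comp S (I : eqType) (s : seq I) (f : I -> G -> R) :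
  (forall p, p \in s -> comp S (f p)) -> comp S (fun k => \sum_(p <- s) f p k).
Proof.
elim: s => [|p s IH] H.
  by under [X in comp S X]funext => k do rewrite big_nil; apply: comp0.
under [X in comp S X]funext => k do rewrite big_cons.
apply: comp_add; first by apply: H; rewrite mem_head.
by apply: IH => q qs; apply: H; rewrite in_cons qs orbT.
Qed.

Lemma comp_mono S S' a : S `<=` S' -> comp S a -> comp S' a.
Proof. by move=> SS [h1 h2]; split => // g /h2 /SS. Qed.

Lemma setprod_comp S S' z :
  skew_setprod alpha u (comp S) (comp S') z ->
  comp [set k | exists g h, S g /\ S' h /\ k = gmul g h] z.
Proof.
move=> [s [Hs ->]]; apply: sum_comp => p /Hs [h1 h2].
exact: mul_comp.
Qed.


Variable N : set G.
Hypothesis HN : normal_subgroup N.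

Lemma Nmul g h : N g -> N h -> N (gmul g h). Proof. by case: HN => _ H _ _; apply: H. Qed.
Lemma Ninv g : N g -> N (ginv g). Proof. by case: HN => _ _ H _; apply: H. Qed.
Lemma Nconj x y : N y -> N (gmul (ginv x) (gmul y x)). Proof. by case: HN => _ _ _ H; apply: H. Qed.
Lemma N1 : N gone. Proof. by case: HN. Qed.
Lemma NinvE g : N (ginv g) -> N g. Proof. by move=> /Ninv; rewrite invgK. Qed.

Lemma Nswap x g : N (gmul (ginv x) g) -> N (gmul g (ginv x)).
Proof.
move=> /(Nconj (ginv x)); rewrite invgK.
by rewrite !mulgA mulgV mul1g.
Qed.

Lemma Nne1 x g : N (gmul (ginv x) g) -> ~ N x -> g != gone.
Proof. by move=> H Nx; apply/eqP => g1; apply: Nx; move: H; rewrite g1 mulg1 => /NinvE. Qed.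

Lemma Ncos1 x g h : N (gmul (ginv x) g) -> N (gmul x h) -> N (gmul g h).
Proof.
move=> /Nswap H1 H2; have := Nmul H1 H2.
by rewrite -mulgA mulKg.
Qed.

Lemma Ncos2 x g h : N g -> N (gmul (ginv x) h) -> N (gmul (ginv x) (gmul g h)).
Proof.
move=> /(Nconj x) H1 H2; have := Nmul H1 H2.
by rewrite -mulgA -(mulgA g) mulVKg.
Qed.

Lemma Nxginv x g : N (gmul (ginv x) g) -> N (gmul (ginv (ginv x)) (ginv g)).
Proof. by move=> /Nswap /Ninv; rewrite invgM invgK. Qed.


Definition Sx (x : G) : set G := fun g => N (gmul (ginv x) g).

Lemma TE x : coset_component D N x = comp (Sx x).
Proof. by []. Qed.

Definition sx (x : G) : G -> R := fun g =>
  if `[< N x >] then dl 1 g else if `[< N (gmul (ginv x) g) >] then u g else 0.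

Lemma sx_T x : comp (Sx x) (sx x).
Proof.
rewrite /sx; case: (asboolP (N x)) => Nx.
  split; first split.
  - apply: (@sub_finite_set _ _ [set gone]); last exact: finite_set1.
    move=> g; rewrite /mkset /dl; case: (g =P gone) => [-> _|_] //; by rewrite eqxx.
  - move=> g; rewrite /dl; case: (g =P gone) => [->|_]; [exact: De | exact: D0].
  - move=> g; rewrite /dl; case: (g =P gone) => [->|]; last by rewrite eqxx.
    by rewrite /Sx mulg1 => _; apply: Ninv.
split; first split.
- apply: sub_finite_set FinU => g /=.
  case: asboolP => [Hg ug|_]; last by rewrite eqxx.
  by split => //; exact: Nne1 Hg Nx.
- by move=> g; case: asboolP => _; [exact: Du | exact: D0].
- move=> g; case: asboolP => [Hg _ | _]; [exact: Hg | by rewrite eqxx].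
Qed.

Lemma E_lemma x a b k : ~ N x -> comp (Sx x) a -> comp (Sx (ginv x)) b -> k != gone ->
  skew_mul alpha u a b k = 0.
Proof.
move=> Nx [_ Sa] [[_ Db] Sb] k1; apply: fsbig1 => g _.
have [ag|ag] := eqVneq (a g) 0; first by rewrite ag mul0r.
have [bg|bg] := eqVneq (b (gmul (ginv g) k)) 0; first by rewrite bg mul0r alpha0 mulr0.
have Hg := Sa _ ag; have Hb := Sb _ bg; rewrite /Sx invgK in Hb.
have g1 := Nne1 Hg Nx.
have gk : g != k.
  apply/eqP => gk; apply: Nx; move: Hb; by rewrite gk mulVg mulg1.
have := alpha_img (Db (gmul (ginv g) k)); rewrite Hort // => ->.
by rewrite mulr0.
Qed.


Lemma sum_delta (r : seq G) h (y : R) : uniq r -> h \in r ->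
  \sum_(g <- r) (if g == h then y else 0) = y.
Proof.
move=> ur hr; rewrite (bigD1_seq h) //= eqxx big1 ?addr0 //.
by move=> g /negbTE ->.
Qed.

Definition uCx x := skew_mul alpha u (sx x) (sx (ginv x)) gone.

Lemma uC_sum x : ~ N x -> exists r, uniq r /\ (forall h, sx x h != 0 -> h \in r) /\
  uCx x = \sum_(g <- r) (if `[< N (gmul (ginv x) g) >] then u g else 0).
Proof.
move=> Nx; have [[fs _] _] := sx_T x.
have [r [ur Hr]] := fin_enum fs.
exists r; split => //; split; first by move=> h /Hr.
rewrite /uCx /skew_mul (fsumE (r := r)) //; last first.
  move=> i ir; have : sx x i = 0.
    by apply/eqP; apply: contraT => /Hr; rewrite (negbTE ir).
  by move=> ->; rewrite mul0r.
apply: eq_bigr => g _; rewrite mulg1 /sx (asboolF Nx).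
have Nx' : ~ N (ginv x) by move/NinvE.
rewrite (asboolF Nx'); case: asboolP => [Hg|_]; last by rewrite mul0r.
by rewrite (asboolT (Nxginv Hg)) uu alpha_u uu.
Qed.

Lemma P1 x h y : ~ N x -> N (gmul (ginv x) h) -> D h y -> uCx x * y = y /\ y * uCx x = y.
Proof.
move=> Nx Hh Dy.
have [->|y0] := eqVneq y 0; first by rewrite mulr0 mul0r.
have [r [ur [Hr ->]]] := uC_sum Nx.
have hr : h \in r.
  apply: Hr; rewrite /sx (asboolF Nx) (asboolT Hh).
  by apply: contra y0 => /eqP uh; rewrite -(uL Dy) uh mul0r.
have h1 := Nne1 Hh Nx.
split.
- rewrite mulr_suml -[RHS](sum_delta y ur hr); apply: eq_bigr => g _.
  case: asboolP => [Hg|Hn]; last first.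
    by rewrite mul0r; case: eqP => // gh; exfalso; apply: Hn; rewrite gh.
  case: eqP => [->|/eqP gh]; first exact: uL.
  exact: (zero_prod gh (Nne1 Hg Nx) h1 (Du g) Dy).
- rewrite mulr_sumr -[RHS](sum_delta y ur hr); apply: eq_bigr => g _.
  case: asboolP => [Hg|Hn]; last first.
    by rewrite mulr0; case: eqP => // gh; exfalso; apply: Hn; rewrite gh.
  case: eqP => [->|/eqP gh]; first exact: uR.
  have hg : h != g by rewrite eq_sym.
  exact: (zero_prod hg h1 (Nne1 Hg Nx) Dy (Du g)).
Qed.


Lemma setprod_comp' (A B : set (G -> R)) S S' z :
  (forall a, A a -> comp S a) -> (forall b, B b -> comp S' b) ->
  skew_setprod alpha u A B z ->
  comp [set k | exists g h, S g /\ S' h /\ k = gmul g h] z.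
Proof.
move=> HA HB [s [Hs ->]]; apply: sum_comp => p /Hs [h1 h2].
exact: mul_comp (HA _ h1) (HB _ h2).
Qed.

Lemma P2 x z : ~ N x ->
  skew_setprod alpha u (comp (Sx x)) (comp (Sx (ginv x))) z ->
  (forall k, k != gone -> z k = 0) /\ uCx x * z gone = z gone /\ z gone * uCx x = z gone.
Proof.
move=> Nx [s [Hs ->]]; split.
  move=> k k1; apply: big1_seq => p /andP [_ /Hs [h1 h2]]; exact: (E_lemma Nx h1 h2 k1).
have key : forall p, p \in s -> forall g,
  let t := p.1 g * alpha g (p.2 (gmul (ginv g) gone) * u (ginv g)) in
  uCx x * t = t /\ t * uCx x = t.
  move=> p /Hs [[[_ Da] Sa] [[_ Db] _]] g /=.
  have [->|ag] := eqVneq (p.1 g) 0; first by rewrite !mul0r mulr0.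
  apply: (P1 Nx (Sa _ ag)); apply: DMl; apply: alpha_in; apply: DMl; exact: Du.
split.
- rewrite mulr_sumr; apply: eq_big_seq => p ps.
  by rewrite /skew_mul mulr_sumr; apply: eq_bigr => g _; case: (key p ps g).
- rewrite mulr_suml; apply: eq_big_seq => p ps.
  by rewrite /skew_mul mulr_suml; apply: eq_bigr => g _; case: (key p ps g).
Qed.

Lemma EPS x : skew_mul alpha u (sx x) (sx (ginv x)) = dl (if `[< N x >] then 1 else uCx x).
Proof.
apply: funext => k; case: (asboolP (N x)) => Nx.
  have e1 : sx x = dl 1 by apply: funext => g; rewrite /sx asboolT.
  have e2 : sx (ginv x) = dl 1 by apply: funext => g; rewrite /sx asboolT //; apply: Ninv.
  by rewrite e1 e2 mul_dlL mul1r.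
rewrite /dl; case: (k =P gone) => [->|/eqP k1]; first by [].
exact: (E_lemma Nx (sx_T x) (sx_T (ginv x)) k1).
Qed.


Lemma epsP x : eps_unit (skew_mul alpha u) (skew_setprod alpha u) ginv
    (coset_component D N) x (skew_mul alpha u (sx x) (sx (ginv x))).
Proof.
split.
  exists [:: (sx x, sx (ginv x))]; split.
    by move=> p; rewrite inE => /eqP -> /=; split; apply: sx_T.
  by apply: funext => k; rewrite big_seq1.
move=> z Hz.
have [[_ Dz] _] := setprod_comp' (fun a (h : comp (Sx x) a) => h)
  (fun b (h : comp (Sx (ginv x)) b) => h) Hz.
rewrite EPS; split; apply: funext => k; [rewrite mul_dlL | rewrite mul_dlR].
- case: asboolP => Nx; first by rewrite mul1r.
  have [h1 [h2 h3]] := P2 Nx Hz.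
  by case: (k =P gone) => [->|/eqP k1] //; rewrite h1 // mulr0.
- case: asboolP => Nx; first by rewrite mul1r alpha_u uR.
  have [h1 [h2 h3]] := P2 Nx Hz.
  case: (k =P gone) => [->|/eqP k1]; last by rewrite h1 // mul0r.
  by rewrite invg1 ue mulr1 alphae.
Qed.

Lemma main_x x :
  skew_setprod alpha u (skew_setprod alpha u (coset_component D N x)
      (coset_component D N (ginv x))) (coset_component D N x)
  = coset_component D N x.
Proof.
apply: funext => z; apply: propext; split.
- move=> Hz; rewrite TE.
  have HA : forall a, skew_setprod alpha u (comp (Sx x)) (comp (Sx (ginv x))) a -> comp N a.
    move=> a Ha; apply: comp_mono (setprod_comp' (fun a (h : comp (Sx x) a) => h)
      (fun b (h : comp (Sx (ginv x)) b) => h) Ha).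
    move=> k [g [h [Hg [Hh ->]]]]; apply: (Ncos1 Hg).
    by move: Hh; rewrite /Sx invgK.
  apply: comp_mono (setprod_comp' HA (fun b (h : comp (Sx x) b) => h) Hz).
  by move=> k [g [h [Hg [Hh ->]]]]; apply: Ncos2.
- move=> Ha; exists [:: (skew_mul alpha u (sx x) (sx (ginv x)), z)]; split.
    by move=> p; rewrite inE => /eqP -> /=; split => //; case: (epsP x).
  apply: funext => k; rewrite big_seq1 EPS mul_dlL.
  case: asboolP => Nx /=; first by rewrite mul1r.
  have [->|zk] := eqVneq (z k) 0; first by rewrite mulr0.
  have [[_ Dz] Sz] := Ha.
  by case: (P1 Nx (Sz _ zk) (Dz k)).
Qed.

End Main.

Theorem proposition8p3 (G : groupType) (R : pzRingType)
    (D : G -> set R) (alpha : G -> R -> R) (one1 : G -> R) :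
  unital_partial_action D alpha ->
  (forall g, is_identity_of (D g) (one1 g)) ->
  (forall g h, g != h -> g != gone -> h != gone -> setprod (D g) (D h) = [set 0]) ->
  finite_set (range one1) ->
  forall N : set G, normal_subgroup N ->
  epsilon_crossed_product (skew_mul alpha one1) (skew_setprod alpha one1)
    ginv (coset_component D N).
Proof.
move=> HPA Hone Hort Hfin N HN; split.
  move=> i; split; first exact: (main_x HPA Hone Hort Hfin HN i).
  by eexists; exact: (epsP HPA Hone Hort Hfin HN i).
move=> i; exists (sx one1 N i); split; first exact: (sx_T HPA Hone Hort Hfin HN i).
exists (sx one1 N (ginv i)); split; first exact: (sx_T HPA Hone Hort Hfin HN (ginv i)).
exists (skew_mul alpha one1 (sx one1 N i) (sx one1 N (ginv i))),
  (skew_mul alpha one1 (sx one1 N (ginv i)) (sx one1 N (ginv (ginv i)))).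
split; first exact: (epsP HPA Hone Hort Hfin HN i).
split; first exact: (epsP HPA Hone Hort Hfin HN (ginv i)).
by rewrite invgK.
Qed.
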